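(* Let $T\in\overline{\mathrm{Sub}}(X,1)$ and let $r$ be a positive integer with $T\subset B(1,r)$. Then \[ \mathcal{R}(T)=\bigsqcup_{\substack{T_1,T_2\in\mathcal{R}_{r+1}\\ T_1\cap T_2=T}}\mathrm{SCyl}(T_1)\times\mathrm{SCyl}(T_2),\] a disjoint union.
   Context: $N\geq2$, $F_N$ free with free basis $A$, $X$ its Cayley graph (a tree with vertex set $F_N$, unit edge lengths, path metric $d_X$), $\partial X$ its boundary, $B(1,r)=\{x\in X: d_X(1,x)\le r\}$. $\mathcal{C}_N$: closed subsets of $\partial X$ with at least two points. $\mathrm{Conv}(S)$: union of bi-infinite geodesics joining points of $S$. $\overline{\mathrm{Sub}}(X,1)$: finite subtrees of $X$ containing $1$ (including $\{1\}$). $\mathcal{R}(T)=\{(S_1,S_2)\in\mathcal{C}_N^2:\mathrm{Conv}(S_1)\cap\mathrm{Conv}(S_2)=T\}$. For an oriented edge $e$, $\mathrm{Cyl}(e)$ is the set of ends of geodesic rays starting with $e$; for a finite subtree $T'$ with $\geq2$ vertices and terminal edges $e_1,\dots,e_m$ (oriented edges ending at degree-one vertices), $\mathrm{SCyl}(T')=\{S\in\mathcal{C}_N: S\subset\bigcup_i\mathrm{Cyl}(e_i),\ S\cap\mathrm{Cyl}(e_i)\neq\emptyset\ \forall i\}$. For an integer $r\ge1$, $\mathcal{R}_r$ (round graphs of grade $r$ based at $1$) is the set of finite subtrees $T'$ of $X$ containing $1$ such that $1$ has degree $\geq 2$ in $T'$ and every degree-one vertex $u$ of $T'$ satisfies $d_X(1,u)=r$.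 *)

(* Defs.v *)
From mathcomp Require Import all_boot.
Set Implicit Arguments. Unset Strict Implicit. Unset Printing Implicit Defensive.

Section FreeTree.
Variable N : nat.

(* A letter is a basis element a_i (false) or its inverse a_i^{-1} (true). *)
Definition letter := ('I_N * bool)%type.
Definition linv (l : letter) : letter := (l.1, ~~ l.2).

(* Finite words; vertices of X = reduced words = elements of F_N. *)
Definition word := seq letter.
Definition reduced (w : word) : bool :=
  match w with
  | [::] => true
  | a :: w' => path (fun x y => y != linv x) a w'
  end.

(* Cayley graph X: g adjacent to g a^{+-1} (right multiplication).
   For reduced words this is: one is the other with one letter appended. *)
Definition adj (u v : word) : Prop :=
  (exists l, v = rcons u l) \/ (exists l, u = rcons v l).

(* Points of the boundary dX: infinite reduced words (ends of geodesic rays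
   from 1). *)
Definition bpoint := nat -> letter.
Definition redInf (xi : bpoint) : Prop := forall n, xi n.+1 != linv (xi n).

Definition prefI (v : word) (xi : bpoint) : Prop := v = mkseq xi (size v).
Definition prefF (v u : word) : Prop := v = take (size v) u.

(* Boundary sets and the class C_N: closed subsets of dX with >= 2 points.
   Closedness w.r.t. the usual (cylinder) topology on dX. *)
Definition bset := bpoint -> Prop.
Definition closedB (S : bset) : Prop :=
  forall xi, redInf xi ->
    (forall n, exists eta, S eta /\ forall k, k < n -> eta k = xi k) -> S xi.
Definition CN (S : bset) : Prop :=
  (forall xi, S xi -> redInf xi) /\ closedB S /\
  exists xi eta, S xi /\ S eta /\ xi <> eta.

(* v is a vertex of the bi-infinite geodesic joining xi and eta (xi <> eta):
   v is a prefix of xi or eta of length >= the length of their common prefix. *)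
Definition onGeod (xi eta : bpoint) (v : word) : Prop :=
  (prefI v xi \/ prefI v eta) /\
  ~ (prefI v xi /\ prefI v eta /\ xi (size v) = eta (size v)).

Definition Conv (S : bset) (v : word) : Prop :=
  exists xi eta, S xi /\ S eta /\ xi <> eta /\ onGeod xi eta v.

(* v is a vertex of the geodesic ray from the vertex x to the end xi. *)
Definition onRay (x : word) (xi : bpoint) (v : word) : Prop :=
  (prefF v x \/ prefI v xi) /\
  ~ (prefI v xi /\ prefF (rcons v (xi (size v))) x).

(* Cyl(e) for the oriented edge e = (x,u): ends of geodesic rays from x whose
   first edge is e. *)
Definition Cyl (x u : word) (xi : bpoint) : Prop :=
  adj x u /\ redInf xi /\ onRay x xi u.

Definition vset := word -> Prop.

Fixpoint walkIn (T : vset) (u : word) (p : seq word) (v : word) : Prop :=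
  match p with
  | [::] => u = v
  | w :: p' => adj u w /\ T w /\ walkIn T w p' v
  end.

(* A finite subtree of X, given by its vertex set (connected induced subgraph). *)
Definition finSubtree (T : vset) : Prop :=
  (forall v, T v -> reduced v) /\
  (exists s : seq word, forall v, T v -> v \in s) /\
  (forall u v, T u -> T v -> exists p, walkIn T u p v).

Definition Sub1 (T : vset) : Prop := finSubtree T /\ T [::].

Definition deg1 (T : vset) (u : word) : Prop :=
  exists x, T x /\ adj u x /\ forall y, T y -> adj u y -> y = x.

(* Round graphs of grade r based at 1; d_X(1,u) = size u for reduced u. *)
Definition round (r : nat) (T : vset) : Prop :=
  Sub1 T /\
  (exists a b, a <> b /\ T a /\ T b /\ adj [::] a /\ adj [::] b) /\
  (forall u, T u -> deg1 T u -> size u = r).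

Definition terminal (T : vset) (x u : word) : Prop :=
  T x /\ T u /\ adj x u /\ deg1 T u.

Definition SCyl (T : vset) (S : bset) : Prop :=
  CN S /\
  (forall xi, S xi -> exists x u, terminal T x u /\ Cyl x u xi) /\
  (forall x u, terminal T x u -> exists xi, S xi /\ Cyl x u xi).

Definition RT (T : vset) (S1 S2 : bset) : Prop :=
  CN S1 /\ CN S2 /\ forall v, (Conv S1 v /\ Conv S2 v) <-> T v.

End FreeTree.

(* Main.v *)
Require Import Defs.
From mathcomp Require Import all_boot.
From mathcomp Require Import zify.
From Stdlib Require Import Classical.

Set Implicit Arguments. Unset Strict Implicit. Unset Printing Implicit Defensive.

Section Helpers.
Variable N : nat.
Implicit Types (u v w x : word N) (xi eta : bpoint N) (T : vset N) (S : bset N).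

Definition Pb S v := exists xi, S xi /\ prefI v xi.
Definition cutT (r : nat) S : vset N := fun v => Pb S v /\ size v <= r.

Lemma prefI_nil xi : prefI [::] xi.
Proof. by []. Qed.

Lemma prefIP v xi : prefI v xi <-> forall i, i < size v -> nth (xi 0) v i = xi i.
Proof.
split.
- by move=> H i Hi; rewrite H nth_mkseq.
- move=> H; apply: (eq_from_nth (x0 := xi 0)); rewrite ?size_mkseq // => i Hi.
  by rewrite nth_mkseq // H.
Qed.

Lemma prefI_take v xi k : prefI v xi -> prefI (take k v) xi.
Proof.
move/prefIP=> H; apply/prefIP => i; rewrite size_take_min => Hi.
rewrite nth_take; last by move: Hi; rewrite leq_min => /andP [].
by apply: H; move: Hi; rewrite leq_min => /andP [].
Qed.

Lemma prefI_rcons v xi : prefI v xi -> prefI (rcons v (xi (size v))) xi.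
Proof. by move=> H; rewrite /prefI size_rcons mkseqS -H. Qed.

Lemma prefI_eq v w xi : prefI v xi -> prefI w xi -> size w <= size v ->
  w = take (size w) v.
Proof.
move=> /prefIP Hv /prefIP Hw Hs.
apply: (eq_from_nth (x0 := xi 0)); first by rewrite size_takel.
move=> i Hi; rewrite nth_take // Hw // Hv //; exact: leq_trans Hi Hs.
Qed.

Lemma prefI_head v xi eta : prefI v xi -> prefI v eta -> 0 < size v -> xi 0 = eta 0.
Proof.
rewrite /prefI => H1 H2 Hs.
have E : mkseq xi (size v) = mkseq eta (size v) by rewrite -H1 -H2.
have := congr1 (fun s => nth (xi 0) s 0) E.
by rewrite /= !nth_mkseq.
Qed.

Lemma prefF_size v u : prefF v u -> size v <= size u.
Proof. move=> H; rewrite H size_take_min; exact: geq_minr. Qed.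

Lemma prefI_prefF w u xi : prefF w u -> prefI u xi -> prefI w xi.
Proof. by move=> H Hu; rewrite H; apply: prefI_take. Qed.

Lemma prefF_trans w c u : prefF w c -> prefF c u -> prefF w u.
Proof.
move=> H1 H2; have Hs := prefF_size H1.
rewrite /prefF {1}H1 {1}H2 take_takel //.
Qed.

Lemma reduced_prefI v xi : redInf xi -> prefI v xi -> reduced v.
Proof.
move=> Hr ->; case: (size v) => // n.
rewrite /mkseq /=.
have: forall m k, path (fun (a b : letter N) => b != linv a) (xi k) [seq xi i | i <- iota k.+1 m].
  by elim=> // m IH k /=; rewrite Hr IH.
by apply.
Qed.

Lemma walk_cat T u p w q v : walkIn T u p w -> walkIn T w q v -> walkIn T u (p ++ q) v.
Proof.
elim: p u => [|y p IH] u /=; first by move=> ->.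
by case=> [H1 [H2 H3]] H4; split=> //; split=> //; apply: IH.
Qed.

Lemma walk_prefix T u p v : walkIn T u p v -> forall k, k <= size v ->
  (k <= size u /\ take k v = take k u) \/ T (take k v).
Proof.
elim: p u => [|w p IH] u /=; first by move=> -> k Hk; left.
case=> Had [Tw Hw] k Hk.
case: (IH w Hw k Hk) => [[Hkw E]|]; last by right.
rewrite E; case: Had => [[l Ew]|[l Eu]]; subst.
- rewrite size_rcons in Hkw.
  case: (leqP k (size u)) => Hku.
    by left; split=> //; rewrite -cats1 takel_cat.
  by right; rewrite take_oversize // size_rcons.
- left; rewrite size_rcons; split; first exact: leqW.
  by rewrite -cats1 takel_cat.
Qed.

Lemma sub1_take T v k : Sub1 T -> T v -> T (take k v).
Proof.
case=> [[_ [_ Hc]] T0] Tv.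
have [p Hp] := Hc _ _ T0 Tv.
case: (leqP k (size v)) => Hk; last by rewrite take_oversize // ltnW.
case: (walk_prefix Hp Hk) => // [[H0 _]].
by move: H0; rewrite leqn0 => /eqP ->; rewrite take0.
Qed.

Lemma walk_root T v : (forall w k, T w -> T (take k w)) -> T v ->
  (exists p, walkIn T [::] p v) /\ (exists p, walkIn T v p [::]).
Proof.
elim/last_ind: v => [|v l IH] HT Tv; first by split; exists [::].
have Tv' : T v by have := HT _ (size v) Tv; rewrite -cats1 take_size_cat.
case: (IH HT Tv') => [[p Hp] [q Hq]]; split.
- exists (rcons p (rcons v l)); rewrite -cats1; apply: (walk_cat Hp) => /=.
  by split; [left; exists l|split].
- exists (v :: q) => /=; by split; [right; exists l|split].
Qed.

Fixpoint allw n : seq (word N) :=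
  if n is m.+1 then [::] :: [seq l :: w | l <- enum {: 'I_N * bool}, w <- allw m]
  else [:: [::]].

Lemma allwP n w : size w <= n -> w \in allw n.
Proof.
elim: n w => [|n IH] [|l w] //= Hs.
rewrite in_cons; apply/orP; right.
apply: (allpairs_f (fun (l : 'I_N * bool) (w : word N) => l :: w)).
  by rewrite mem_enum.
exact: IH.
Qed.

Lemma bound (s : seq (word N)) : exists M, forall w, w \in s -> size w <= M.
Proof.
exists (foldr maxn 0 (map size s)); elim: s => //= x s IH w.
rewrite in_cons => /orP [/eqP ->|/IH H]; first exact: leq_maxl.
exact: leq_trans H (leq_maxr _ _).
Qed.

Lemma deg1_uniq T u y1 y2 : deg1 T u -> T y1 -> adj u y1 -> T y2 -> adj u y2 -> y1 = y2.
Proof. by case=> x [_ [_ H]] T1 A1 T2 A2; rewrite (H y1) // (H y2). Qed.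

Lemma rcons_neq_nil w (l : letter N) : [::] <> rcons w l.
Proof. by case: w. Qed.

Lemma ext_leaf T w : Sub1 T -> T w -> w <> [::] ->
  exists u, T u /\ prefF w u /\ deg1 T u.
Proof.
move=> HS; have [[_ [[s Hs] _]] _] := HS; have [M HM] := bound s.
have nochild : forall w, T w -> w <> [::] -> ~ (exists l, T (rcons w l)) ->
    exists u, T u /\ prefF w u /\ deg1 T u.
  move=> w0 Tw nw Hno; exists w0; split=> //; split; first by rewrite /prefF take_size.
  case/lastP: w0 Tw nw Hno => [//|w' l'] Tw _ Hno.
  exists w'; split; first by have := sub1_take (size w') HS Tw; rewrite -cats1 take_size_cat.
  split; first by right; exists l'.
  move=> y Ty [[l Ey]|[l Ey]]; first by subst; case: Hno; exists l.
  by case: (rcons_inj Ey).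
suff H : forall n w, T w -> w <> [::] -> M - size w <= n ->
    exists u, T u /\ prefF w u /\ deg1 T u.
  by move=> Tw nw; apply: (H _ w Tw nw (leqnn _)).
elim=> [|n IH] w0 Tw nw Hn; case: (classic (exists l, T (rcons w0 l))) => [[l Tc]|Hno];
  try exact: nochild.
- have := HM _ (Hs _ Tc); rewrite size_rcons => H; lia.
- have Hc : M - size (rcons w0 l) <= n by rewrite size_rcons; lia.
  have [u [Tu [Pu Du]]] := IH _ Tc (@rcons_neq_nil w0 l \o esym) Hc.
  exists u; split=> //; split=> //; apply: prefF_trans Pu.
  by rewrite /prefF -cats1 take_size_cat.
Qed.

Lemma round_size k T v : round k.+1 T -> T v -> size v <= k.+1.
Proof.
case=> HS [_ Hd] Tv; case: (v =P [::]) => [->//|nv].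
have [u [Tu [Pu Du]]] := ext_leaf HS Tv nv.
rewrite -(Hd _ Tu Du); exact: prefF_size.
Qed.

Lemma Cyl_out_inv x l xi : Cyl x (rcons x l) xi -> prefI (rcons x l) xi.
Proof.
case=> _ [_ [[H|H] _]] //.
have := prefF_size H; rewrite size_rcons ltnn //.
Qed.

Lemma Cyl_out x l xi : redInf xi -> prefI (rcons x l) xi -> Cyl x (rcons x l) xi.
Proof.
move=> Hr Hp; split; first by left; exists l.
split=> //; split; first by right.
case=> _ /prefF_size; rewrite !size_rcons; lia.
Qed.

Lemma adj_nil a : adj [::] a -> exists l : letter N, a = [:: l].
Proof.
case=> [[l ->]|[l E]]; first by exists l.
by have := congr1 size E; rewrite size_rcons.
Qed.

Lemma Conv_P S : Conv S [::] -> forall v, Conv S v <-> Pb S v.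
Proof.
case=> xi' [eta' [S1 [S2 [ne G]]]] v; have Hg := proj2 G; split.
- by case=> xi [eta [Sx [Se [_ [[H|H] _]]]]]; [exists xi|exists eta].
- case=> xi [Sx Hp]; case: (v =P [::]) => [->|nv].
    by exists xi', eta'.
  have Hs : 0 < size v by case: v nv {Hp} => // H; case: H.
  have [zeta [Sz Dz]] : exists zeta, S zeta /\ xi 0 <> zeta 0.
    case: (classic (xi 0 = xi' 0)) => E.
      by exists eta'; split=> // E'; apply: Hg; rewrite -E -E'.
    by exists xi'.
  exists xi, zeta; split=> //; split=> //; split; first by move=> E; apply: Dz; rewrite E.
  split; first by left.
  by case=> H1 [H2 _]; apply: Dz; apply: prefI_head H1 H2 Hs.
Qed.

Lemma cut_take r S v k : cutT r S v -> cutT r S (take k v).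
Proof.
case=> [[xi [Sx Hp]] Hs]; split; first by exists xi; split=> //; apply: prefI_take.
rewrite size_take_min; exact: leq_trans (geq_minr _ _) Hs.
Qed.

Lemma fwd_round r S : CN S -> Conv S [::] -> round r.+1 (cutT r.+1 S).
Proof.
move=> [HCr [_ [xi0 [_ [Sx0 _]]]]] HC.
have T0 : cutT r.+1 S [::] by split=> //; exists xi0.
have Hab : exists a b, a <> b /\ cutT r.+1 S a /\ cutT r.+1 S b /\ adj [::] a /\ adj [::] b.
  case: HC => xi [eta [Sx [Se [_ [_ Hg]]]]].
  exists [:: xi 0], [:: eta 0]; split.
    by case=> E; apply: Hg.
  split; first by split=> //; exists xi.
  split; first by split=> //; exists eta.
  by split; left; [exists (xi 0)|exists (eta 0)].
split; [split; [split|] |split] => //.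
- by move=> v [[xi [Sx Hp]] _]; apply: (reduced_prefI (HCr _ Sx) Hp).
- split; first by exists (allw r.+1) => v [_ Hs]; apply: allwP.
  move=> u v Tu Tv.
  have HT : forall w k, cutT r.+1 S w -> cutT r.+1 S (take k w) by move=> *; apply: cut_take.
  have [_ [q Hq]] := walk_root HT Tu; have [[p Hp] _] := walk_root HT Tv.
  by exists (q ++ p); apply: walk_cat Hq Hp.
- move=> u Tu Du; have [[xi [Sx Hp]] Hs] := Tu.
  case: (ltnP (size u) r.+1) => Hlt; last by apply/eqP; rewrite eqn_leq Hs Hlt.
  have Tc : cutT r.+1 S (rcons u (xi (size u))).
    split; first by exists xi; split=> //; apply: prefI_rcons.
    by rewrite size_rcons.
  have Ac : adj u (rcons u (xi (size u))) by left; exists (xi (size u)).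
  case/lastP: u Tu Du Hp Hs Hlt Tc Ac => [|u' l] Tu Du Hp Hs Hlt Tc Ac.
    case: Hab => a [b [nab [Ta [Tb [Aa Ab]]]]]; case: nab.
    exact: (deg1_uniq Du Ta Aa Tb Ab).
  have Tu' : cutT r.+1 S u'.
    by have := cut_take (size u') Tu; rewrite -cats1 take_size_cat.
  have Au' : adj (rcons u' l) u' by right; exists l.
  have := congr1 size (deg1_uniq Du Tc Ac Tu' Au'); rewrite !size_rcons; lia.
Qed.

Lemma fwd_SCyl r S : CN S -> Conv S [::] -> SCyl (cutT r.+1 S) S.
Proof.
move=> HCN HC; have HR := fwd_round r HCN HC.
have [HCr _] := HCN.
split=> //; split.
- move=> xi Sx; exists (mkseq xi r), (mkseq xi r.+1).
  have Tx : cutT r.+1 S (mkseq xi r).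
    by split; [exists xi; split=> //; rewrite /prefI size_mkseq | rewrite size_mkseq].
  have Tu : cutT r.+1 S (mkseq xi r.+1).
    by split; [exists xi; split=> //; rewrite /prefI size_mkseq | rewrite size_mkseq].
  rewrite mkseqS in Tu *; split; last first.
    apply: Cyl_out (HCr _ Sx) _; rewrite -mkseqS /prefI size_mkseq //.
  split=> //; split=> //; split; first by left; exists (xi r).
  exists (mkseq xi r); split=> //; split; first by right; exists (xi r).
  move=> y [_ Hy] [[l Ey]|[l Ey]].
    by move: Hy; rewrite Ey !size_rcons size_mkseq ltnn.
  by case: (rcons_inj Ey).
- move=> x u [Tx [Tu [Axu Du]]].
  have Hsu := proj2 (proj2 HR) _ Tu Du.
  case: Axu => [[l Eu]|[l Ex]].
    subst; case: Tu => [[xi [Sx Hp]] _]; exists xi; split=> //.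
    exact: Cyl_out (HCr _ Sx) Hp.
  by case: Tx => _; rewrite Ex size_rcons Hsu ltnn.
Qed.

Lemma round_P r T S : round r.+1 T -> SCyl T S ->
  (forall v, T v <-> (Pb S v /\ size v <= r.+1)) /\ Conv S [::].
Proof.
move=> HR; have [HS [[a [b [nab [Ta [Tb [Aa Ab]]]]]] Hdeg]] := HR.
case=> [HCN [H1 H2]]; have [HCr [_ [xi0 [_ [Sx0 _]]]]] := HCN.
have sup : forall v, T v -> Pb S v.
  move=> v Tv; case: (v =P [::]) => [->|nv]; first by exists xi0.
  have [u [Tu [Pu Du]]] := ext_leaf HS Tv nv.
  case/lastP: u Tu Pu Du => [|x l] Tu Pu Du.
    by case: nv; move: (prefF_size Pu); case: v {Tv} Pu.
  have Tx : T x by have := sub1_take (size x) HS Tu; rewrite -cats1 take_size_cat.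
  have [xi [Sx Hc]] := H2 _ _ (conj Tx (conj Tu (conj (or_introl (ex_intro _ l erefl)) Du))).
  by exists xi; split=> //; apply: prefI_prefF Pu (Cyl_out_inv Hc).
split.
- move=> v; split; first by move=> Tv; split; [exact: sup|exact: round_size HR Tv].
  case=> [[xi [Sx Hp]] Hs].
  have [x [u [[Tx [Tu [Axu Du]]] Hc]]] := H1 _ Sx.
  have Hsu := Hdeg _ Tu Du.
  case: Axu => [[l Eu]|[l Ex]].
    subst; have Hpu := Cyl_out_inv Hc.
    rewrite (prefI_eq Hpu Hp); last by rewrite Hsu.
    exact: sub1_take.
  by have := round_size HR Tx; rewrite Ex size_rcons Hsu ltnn.
- have [la Ea] := adj_nil Aa; have [lb Eb] := adj_nil Ab; subst.
  have [xi [Sx Hx]] := sup _ Ta; have [eta [Se He]] := sup _ Tb.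
  have Ex : xi 0 = la by move: Hx; rewrite /prefI /= => [[]].
  have Ee : eta 0 = lb by move: He; rewrite /prefI /= => [[]].
  exists xi, eta; split=> //; split=> //; split.
    by move=> E; apply: nab; rewrite -Ex -Ee E.
  split; first by left.
  by case=> _ [_ /= E]; apply: nab; rewrite -Ex -Ee E.
Qed.

End Helpers.

Theorem mainTheorem9 (N : nat) (hN : 2 <= N) (T : vset N) (r : nat)
  (hT : Sub1 T) (hr : 0 < r) (hTB : forall v, T v -> size v <= r) :
  (forall S1 S2 : bset N,
     RT T S1 S2 <->
     exists T1 T2 : vset N,
       [/\ round (r.+1) T1, round (r.+1) T2,
           (forall v, (T1 v /\ T2 v) <-> T v),
           SCyl T1 S1 & SCyl T2 S2]) /\
  (forall (T1 T2 T1' T2' : vset N) (S1 S2 : bset N),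
     round (r.+1) T1 -> round (r.+1) T2 ->
     round (r.+1) T1' -> round (r.+1) T2' ->
     (forall v, (T1 v /\ T2 v) <-> T v) ->
     (forall v, (T1' v /\ T2' v) <-> T v) ->
     SCyl T1 S1 -> SCyl T2 S2 -> SCyl T1' S1 -> SCyl T2' S2 ->
     (forall v, T1 v <-> T1' v) /\ (forall v, T2 v <-> T2' v)).
Proof.
have T0 : T [::] := proj2 hT.
split.
- move=> S1 S2; split.
  + case=> [CN1 [CN2 HC]].
    have [C1 C2] := proj2 (HC [::]) T0.
    exists (cutT r.+1 S1), (cutT r.+1 S2); split.
    * exact: fwd_round.
    * exact: fwd_round.
    * move=> v; split.
        case=> [[P1 _] [P2 _]]; apply/(HC v); split; by apply/Conv_P.
      move=> Tv; have [D1 D2] := proj2 (HC v) Tv.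
      have Hs : size v <= r.+1 by apply: leqW; apply: hTB.
      by split; split=> //; apply/Conv_P.
    * exact: fwd_SCyl.
    * exact: fwd_SCyl.
  + case=> T1 [T2 [R1 R2 HI SC1 SC2]].
    have [E1 C1] := round_P R1 SC1; have [E2 C2] := round_P R2 SC2.
    split; first exact: SC1.1.
    split; first exact: SC2.1.
    move=> v; rewrite (Conv_P C1) (Conv_P C2); split.
      case=> P1 P2; case: (leqP (size v) r.+1) => Hs.
        by apply/HI; split; [apply/E1|apply/E2].
      have Hk : size (take r.+1 v) = r.+1 by rewrite size_takel // ltnW.
      have : T (take r.+1 v).
        apply/HI; split; [apply/E1|apply/E2]; rewrite Hk; split=> //.
          by case: P1 => xi [? ?]; exists xi; split=> //; apply: prefI_take.
        by case: P2 => xi [? ?]; exists xi; split=> //; apply: prefI_take.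
      by move/hTB; rewrite Hk ltnn.
    move=> Tv; have [t1 t2] := proj2 (HI v) Tv.
    by split; [case: (proj1 (E1 v) t1)|case: (proj1 (E2 v) t2)].
- move=> T1 T2 T1' T2' S1 S2 R1 R2 R1' R2' _ _ SC1 SC2 SC1' SC2'.
  have [E1 _] := round_P R1 SC1; have [E2 _] := round_P R2 SC2.
  have [E1' _] := round_P R1' SC1'; have [E2' _] := round_P R2' SC2'.
  by split=> v; rewrite E1 E1' || rewrite E2 E2'.
Qed.
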